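(* Let $p>0$ and let $f$ be twice continuously differentiable on $[0,p]$, such that $f'''$ exists and is bounded in a neighborhood of $s=0$. Then, as $b\to 0^+$, $$\int_0^p f(s)\left(\sqrt{s^2+b^2}-s\right)ds=-\frac{f(0)}{2}\,b^2\ln b+\left(\frac{f(0)}{4}+\frac{f(0)\ln 2}{2}+\frac{f(p)\ln p}{2}-\frac12\int_0^p f'(s)\ln s\,ds\right)b^2+O(b^3).$$ *)

(* Defs.v *)
From Stdlib Require Import Reals Lra.
Open Scope R_scope.

Definition has_deriv_on (g g' : R -> R) (a b : R) : Prop :=
  forall x, a <= x <= b ->
    limit1_in (fun h => (g (x + h) - g x) / h)
              (fun h => h <> 0 /\ a <= x + h <= b) (g' x) 0.

Definition cont_on (g : R -> R) (a b : R) : Prop :=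
  forall x, a <= x <= b -> limit1_in g (fun y => a <= y <= b) (g x) x.

Definition is_RInt (g : R -> R) (a b v : R) : Prop :=
  exists pr : Riemann_integrable g a b, RiemannInt pr = v.

Definition improper_int0 (g : R -> R) (p I : R) : Prop :=
  forall eps, 0 < eps -> exists del, 0 < del /\
    forall e, 0 < e < del -> e < p ->
      exists v, is_RInt g e p v /\ Rabs (v - I) < eps.

(* Main.v *)
From Coquelicot Require Import Coquelicot.
From Stdlib Require Import Reals Lra Psatz.
Require Import Defs.
Open Scope R_scope.

Definition cl (p s : R) := Rmax 0 (Rmin p s).
Definition ext (p : R) (f f1 : R -> R) (s : R) := f (cl p s) + f1 (cl p s) * (s - cl p s).

Lemma cl_in p s : 0 <= s <= p -> cl p s = s.
Proof. intros. unfold cl, Rmax, Rmin; repeat destruct Rle_dec; lra. Qed.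
Lemma cl_lt p s : 0 < p -> s < 0 -> cl p s = 0.
Proof. intros. unfold cl, Rmax, Rmin; repeat destruct Rle_dec; lra. Qed.
Lemma cl_gt p s : 0 < p -> p < s -> cl p s = p.
Proof. intros. unfold cl, Rmax, Rmin; repeat destruct Rle_dec; lra. Qed.
Lemma cl_range p s : 0 < p -> 0 <= cl p s <= p.
Proof. intros. unfold cl, Rmax, Rmin; repeat destruct Rle_dec; lra. Qed.
Lemma cl_lip p s t : 0 < p -> Rabs (cl p s - cl p t) <= Rabs (s - t).
Proof. intros. unfold cl, Rmax, Rmin; repeat destruct Rle_dec; unfold Rabs; repeat destruct Rcase_abs; lra. Qed.

Lemma ext_in p f f1 s : 0 <= s <= p -> ext p f f1 s = f s.
Proof. intros. unfold ext. rewrite cl_in; auto. ring. Qed.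
Lemma ext_lt p f f1 s : 0 < p -> s < 0 -> ext p f f1 s = f 0 + f1 0 * s.
Proof. intros. unfold ext. rewrite cl_lt; auto. ring. Qed.
Lemma ext_gt p f f1 s : 0 < p -> p < s -> ext p f f1 s = f p + f1 p * (s - p).
Proof. intros. unfold ext. rewrite cl_gt; auto. Qed.

Lemma hd_unfold g g' a b x : has_deriv_on g g' a b -> a <= x <= b ->
  forall eps, 0 < eps -> exists alp, 0 < alp /\ forall h, h <> 0 -> a <= x + h <= b ->
    Rabs h < alp -> Rabs ((g (x + h) - g x) / h - g' x) < eps.
Proof.
  intros H hx eps he. destruct (H x hx eps he) as [alp [ha Hq]].
  exists alp. split; auto. intros h h0 hr hl.
  assert (K := Hq h). simpl in K. unfold R_dist in K. apply K. split; auto.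
  rewrite Rminus_0_r; auto.
Qed.

Lemma within_cont g g' a b : has_deriv_on g g' a b -> forall x, a <= x <= b ->
  forall eps, 0 < eps -> exists d, 0 < d /\ forall y, a <= y <= b -> Rabs (y - x) < d ->
  Rabs (g y - g x) < eps.
Proof.
  intros H x hx eps he.
  destruct (hd_unfold g g' a b x H hx 1 Rlt_0_1) as [alp [ha Hq]].
  assert (hM : 0 < Rabs (g' x) + 1) by (pose proof (Rabs_pos (g' x)); lra).
  exists (Rmin alp (eps / (Rabs (g' x) + 1))). split.
  { apply Rmin_glb_lt; auto. apply Rdiv_lt_0_compat; lra. }
  intros y hy hyx.
  destruct (Req_dec y x) as [->|hne].
  { rewrite Rminus_diag, Rabs_R0; auto. }
  assert (hh : y - x <> 0) by lra.
  assert (K := Hq (y - x) hh).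
  replace (x + (y - x)) with y in K by ring.
  specialize (K hy). 
  assert (K2 : Rabs ((g y - g x) / (y - x) - g' x) < 1).
  { apply K. apply Rlt_le_trans with (1 := hyx). apply Rmin_l. }
  set (q := (g y - g x) / (y - x)) in *.
  assert (E : g y - g x = (y - x) * q) by (unfold q; field; auto).
  rewrite E, Rabs_mult.
  assert (hq : Rabs q <= Rabs (g' x) + 1).
  { replace q with ((q - g' x) + g' x) by ring.
    eapply Rle_trans; [apply Rabs_triang|]. lra. }
  assert (hyx2 : Rabs (y - x) < eps / (Rabs (g' x) + 1)).
  { apply Rlt_le_trans with (1 := hyx). apply Rmin_r. }
  apply Rle_lt_trans with (Rabs (y - x) * (Rabs (g' x) + 1)).
  { apply Rmult_le_compat_l; auto. apply Rabs_pos. }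
  apply Rmult_lt_reg_r with (/ (Rabs (g' x) + 1)).
  { apply Rinv_0_lt_compat; lra. }
  rewrite Rmult_assoc, Rinv_r by lra. rewrite Rmult_1_r. exact hyx2.
Qed.

Lemma ext_deriv p f f1 : 0 < p -> has_deriv_on f f1 0 p ->
  forall x, derivable_pt_lim (ext p f f1) x (f1 (cl p x)).
Proof.
  intros hp H x eps he.
  destruct (Rlt_dec x 0) as [hx0|hx0].
  {
    assert (hd : 0 < - x) by lra. exists (mkposreal _ hd). simpl. intros h h0 hh.
    rewrite cl_lt by auto. rewrite (ext_lt p f f1 x), (ext_lt p f f1 (x + h)) by
      (auto; apply Rabs_def2 in hh; lra).
    replace ((f 0 + f1 0 * (x + h) - (f 0 + f1 0 * x)) / h - f1 0) with 0 by (field; auto).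
    rewrite Rabs_R0; auto. }
  destruct (Rlt_dec p x) as [hxp|hxp].
  { assert (hd : 0 < x - p) by lra. exists (mkposreal _ hd). simpl. intros h h0 hh.
    rewrite cl_gt by auto. rewrite (ext_gt p f f1 x), (ext_gt p f f1 (x + h)) by
      (auto; apply Rabs_def2 in hh; lra).
    replace ((f p + f1 p * (x + h - p) - (f p + f1 p * (x - p))) / h - f1 p) with 0 by (field; auto).
    rewrite Rabs_R0; auto. }
  assert (hx : 0 <= x <= p) by lra.
  rewrite cl_in by auto.
  destruct (hd_unfold f f1 0 p x H hx eps he) as [alp [ha Hq]].
  set (m := if Rlt_dec 0 x then (if Rlt_dec x p then Rmin x (p - x) else p) else p).
  assert (hm : 0 < m).
  { unfold m. destruct Rlt_dec; [destruct Rlt_dec|]; try lra. apply Rmin_glb_lt; lra. }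
  assert (hd : 0 < Rmin alp m) by (apply Rmin_glb_lt; auto).
  exists (mkposreal _ hd). simpl. intros h h0 hh.
  assert (h1 : Rabs h < alp) by (eapply Rlt_le_trans; [apply hh | apply Rmin_l]).
  assert (h2 : Rabs h < m) by (eapply Rlt_le_trans; [apply hh | apply Rmin_r]).
  apply Rabs_def2 in h2.
  rewrite (ext_in p f f1 x) by auto.
  destruct (Rle_dec 0 (x + h)) as [c1|c1]; [destruct (Rle_dec (x + h) p) as [c2|c2]|].
  - rewrite ext_in by lra. apply Hq; auto.
  -
    assert (x = p).
    { unfold m in h2. destruct (Rlt_dec 0 x); [destruct (Rlt_dec x p)|].
      - pose proof (Rmin_r x (p - x)); lra.
      - lra.
      - lra. }
    subst x. rewrite ext_gt by lra.
    replace ((f p + f1 p * (p + h - p) - f p) / h - f1 p) with 0 by (field; auto).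
    rewrite Rabs_R0; auto.
  - assert (x = 0).
    { unfold m in h2. destruct (Rlt_dec 0 x); [destruct (Rlt_dec x p)|].
      - pose proof (Rmin_l x (p - x)); lra.
      - lra.
      - lra. }
    subst x. rewrite ext_lt by lra.
    replace ((f 0 + f1 0 * (0 + h) - f 0) / h - f1 0) with 0 by (field; auto).
    rewrite Rabs_R0; auto.
Qed.

Lemma clf_cont p g g' : 0 < p -> has_deriv_on g g' 0 p ->
  forall x, continuity_pt (fun s => g (cl p s)) x.
Proof.
  intros hp H x eps he.
  destruct (within_cont g g' 0 p H (cl p x) (cl_range p x hp) eps he) as [d [hd K]].
  exists d. split; auto. intros y [_ hy]. simpl in *. unfold R_dist in *.
  apply K. apply cl_range; auto.
  eapply Rle_lt_trans; [apply cl_lip; auto | exact hy].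
Qed.

Definition hq (F : R -> R) (c : R) (s : R) := if Req_EM_T s 0 then c else (F s - F 0) / s.

Lemma hq_nz F c s : s <> 0 -> hq F c s = (F s - F 0) / s.
Proof. intros. unfold hq. destruct Req_EM_T; tauto. Qed.

Lemma hq_eq F c s : F s - F 0 = s * hq F c s.
Proof. unfold hq. destruct Req_EM_T. subst; ring. field; auto. Qed.

Lemma hq_cont F F' : (forall x, derivable_pt_lim F x (F' x)) ->
  forall x, continuity_pt (hq F (F' 0)) x.
Proof.
  intros H x.
  destruct (Req_dec x 0) as [->|hx].
  - intros eps he. destruct (H 0 eps he) as [d K].
    exists d. split; [apply cond_pos|]. intros y [_ hy]. simpl in *. unfold R_dist in *.
    rewrite Rminus_0_r in hy.
    unfold hq at 2. destruct Req_EM_T; [|lra].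
    destruct (Req_dec y 0) as [->|hy0].
    + unfold hq. destruct Req_EM_T; [|lra]. rewrite Rminus_diag, Rabs_R0; auto.
    + rewrite hq_nz by auto. specialize (K y hy0 hy). rewrite Rplus_0_l in K. exact K.
  - assert (Hc : continuity_pt (fun s => (F s - F 0) / s) x).
    { apply continuity_pt_div; auto.
      - apply continuity_pt_minus.
        + apply derivable_continuous_pt. exists (F' x). apply H.
        + apply continuity_pt_const. intros a b; auto.
      - apply derivable_continuous_pt, derivable_pt_id. }
    intros eps he. destruct (Hc eps he) as [d [hd K]].
    assert (hx' : 0 < Rabs x) by (apply Rabs_pos_lt; auto).
    exists (Rmin d (Rabs x)). split; [apply Rmin_glb_lt; auto|].
    intros y [_ hy]. simpl in *. unfold R_dist in *.
    assert (hy1 : Rabs (y - x) < d) by (eapply Rlt_le_trans; [apply hy|apply Rmin_l]).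
    assert (hy2 : Rabs (y - x) < Rabs x) by (eapply Rlt_le_trans; [apply hy|apply Rmin_r]).
    assert (y <> 0).
    { intro; subst. rewrite Rminus_0_l, Rabs_Ropp in hy2. lra. }
    destruct (Req_dec y x) as [->|hyx]. { rewrite Rminus_diag, Rabs_R0; lra. }
    rewrite !hq_nz by auto. apply K. split; auto. unfold D_x, no_cond. split; auto.
Qed.

Lemma bound_cont (g : R -> R) a b : a <= b -> (forall x, continuity_pt g x) ->
  exists L, 0 <= L /\ forall s, a <= s <= b -> Rabs (g s) <= L.
Proof.
  intros hab H.
  destruct (continuity_ab_maj (fun s => Rabs (g s)) a b hab) as [M [HM _]].
  { intros c _. apply continuity_pt_comp with (f1 := g) (f2 := Rabs); auto.
    apply Rcontinuity_abs. }
  exists (Rabs (g M)). split; [apply Rabs_pos|]. auto.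
Qed.

Lemma sq_pos b s : 0 < b -> 0 < s ^ 2 + b ^ 2.
Proof. intros. nra. Qed.

Lemma sqrt_facts b s : 0 < b -> let S := sqrt (s ^ 2 + b ^ 2) in
  0 < S /\ S * S = s ^ 2 + b ^ 2 /\ s < S /\ 0 < s + S.
Proof.
  intros hb S. assert (h := sq_pos b s hb).
  assert (h1 : 0 < S) by (apply sqrt_lt_R0; auto).
  assert (h2 : S * S = s ^ 2 + b ^ 2) by (apply sqrt_sqrt; lra).
  assert (h3 : s < S) by nra.
  repeat split; auto; nra.
Qed.

Lemma Gb_deriv b s : 0 < b ->
  is_derive (fun s => (s * sqrt (s ^ 2 + b ^ 2) + b ^ 2 * ln (s + sqrt (s ^ 2 + b ^ 2)) - s ^ 2) / 2) s
    (sqrt (s ^ 2 + b ^ 2) - s).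
Proof.
  intros hb. destruct (sqrt_facts b s hb) as [h1 [h2 [h3 h4]]].
  auto_derive.
  - replace (s * (s * 1) + b * (b * 1)) with (s ^ 2 + b ^ 2) by ring. repeat split; auto; apply sq_pos; auto.
  - replace (s * (s * 1) + b * (b * 1)) with (s ^ 2 + b ^ 2) by ring.
    set (S := sqrt (s ^ 2 + b ^ 2)) in *. field_simplify_eq; [|lra]. nra.
Qed.

Lemma Kb_deriv b s : 0 < b ->
  is_derive (fun s => b ^ 2 / 2 * s - ((s ^ 2 + b ^ 2) * sqrt (s ^ 2 + b ^ 2) - s ^ 3) / 3) s
    (b ^ 2 / 2 - s * (sqrt (s ^ 2 + b ^ 2) - s)).
Proof.
  intros hb. destruct (sqrt_facts b s hb) as [h1 [h2 [h3 h4]]].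
  auto_derive.
  - replace (s * (s * 1) + b * (b * 1)) with (s ^ 2 + b ^ 2) by ring. repeat split; auto; apply sq_pos; auto.
  - replace (s * (s * 1) + b * (b * 1)) with (s ^ 2 + b ^ 2) by ring.
    set (S := sqrt (s ^ 2 + b ^ 2)) in *. field_simplify_eq; [|lra]. nra.
Qed.

Lemma g_cont b s : 0 < b -> continuous (fun s => sqrt (s ^ 2 + b ^ 2) - s) s.
Proof.
  intros hb. apply (@ex_derive_continuous R_AbsRing R_NormedModule). auto_derive.
  replace (s * (s * 1) + b * (b * 1)) with (s ^ 2 + b ^ 2) by ring. repeat split; auto; apply sq_pos; auto.
Qed.

Lemma ln_cont s : 0 < s -> continuous ln s.
Proof. intros. apply (@ex_derive_continuous R_AbsRing R_NormedModule). exists (/ s). apply is_derive_ln; auto. Qed.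

Lemma cc g x : continuity_pt g x -> continuous g x.
Proof. intros H. apply (proj1 (continuity_pt_filterlim g x)). exact H. Qed.
Lemma cpt g x : continuous g x -> continuity_pt g x.
Proof. intros H. apply (proj2 (continuity_pt_filterlim g x)). exact H. Qed.

Lemma exR g a b : a <= b -> (forall x, a <= x <= b -> continuity_pt g x) -> ex_RInt g a b.
Proof.
  intros hab H. apply (@ex_RInt_continuous R_CompleteNormedModule). rewrite Rmin_left, Rmax_right by auto.
  intros. apply cc, H; auto.
Qed.

Lemma RInt_minusR f g a b : ex_RInt f a b -> ex_RInt g a b ->
  RInt (fun x => f x - g x) a b = RInt f a b - RInt g a b.
Proof. intros. exact (RInt_minus f g a b H H0). Qed.
Lemma RInt_plusR f g a b : ex_RInt f a b -> ex_RInt g a b ->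
  RInt (fun x => f x + g x) a b = RInt f a b + RInt g a b.
Proof. intros. exact (RInt_plus f g a b H H0). Qed.
Lemma RInt_scalR f a b l : ex_RInt f a b ->
  RInt (fun x => l * f x) a b = l * RInt f a b.
Proof. intros. exact (RInt_scal f a b l H). Qed.

Lemma RInt_FTC Fn dF a b : a <= b -> (forall x, a <= x <= b -> derivable_pt_lim Fn x (dF x)) ->
  (forall x, a <= x <= b -> continuity_pt dF x) -> RInt dF a b = Fn b - Fn a.
Proof.
  intros hab H1 H2. apply is_RInt_unique.
  apply (is_RInt_derive Fn dF a b).
  - rewrite Rmin_left, Rmax_right by auto. intros. apply is_derive_Reals, H1; auto.
  - rewrite Rmin_left, Rmax_right by auto. intros. apply cc, H2; auto.
Qed.

Lemma ln_cpt s : 0 < s -> continuity_pt ln s.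
Proof. intros. apply derivable_continuous_pt. exists (/ s). apply derivable_pt_lim_ln; auto. Qed.

Lemma e_ln_bound e : 0 < e < 1 -> e * Rabs (ln e) <= 2 * sqrt e.
Proof.
  intros he. set (r := sqrt e).
  assert (hr : 0 < r) by (apply sqrt_lt_R0; lra).
  assert (hrr : r * r = e) by (apply sqrt_sqrt; lra).
  assert (hr1 : r < 1) by nra.
  assert (hl : ln e = 2 * ln r). { rewrite <- hrr, ln_mult by auto. ring. }
  assert (hlr : ln r < 0). { rewrite <- ln_1. apply ln_increasing; lra. }
  assert (hx : 1 + ln (/ r) <= / r). { rewrite <- (exp_ln (/ r)) at 2. apply exp_ineq1_le. apply Rinv_0_lt_compat; auto. }
  rewrite ln_Rinv in hx by auto.
  rewrite hl, Rabs_left by lra.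
  assert (r * (- ln r) <= 1). { apply Rmult_le_reg_l with (/ r). apply Rinv_0_lt_compat; auto.
    rewrite <- Rmult_assoc, Rinv_l by lra. lra. }
  rewrite <- hrr. nra.
Qed.

Lemma part1 (p : R) (F F' h f1 : R -> R) (L : R) : 0 < p ->
  (forall x, derivable_pt_lim F x (F' x)) -> (forall x, continuity_pt F' x) ->
  (forall s, F s - F 0 = s * h s) -> (forall x, continuity_pt h x) ->
  0 <= L -> (forall s, 0 <= s <= p -> Rabs (h s) <= L) ->
  (forall s, 0 <= s <= p -> f1 s = F' s) ->
  improper_int0 (fun s => f1 s * ln s) p ((F p - F 0) * ln p - RInt h 0 p).
Proof.
  intros hp HF HFc Hh Hhc hL HL Hf1 eps heps.
  set (del := Rmin 1 ((eps / (3 * L + 1)) ^ 2)).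
  assert (hq : 0 < eps / (3 * L + 1)) by (apply Rdiv_lt_0_compat; lra).
  exists del. split. { apply Rmin_glb_lt; [lra|]. apply pow_lt; auto. }
  intros e he hep. unfold del in he.
  assert (he1 : e < 1) by (pose proof (Rmin_l 1 ((eps / (3 * L + 1)) ^ 2)); lra).
  assert (he2 : e < (eps / (3 * L + 1)) ^ 2) by (pose proof (Rmin_r 1 ((eps / (3 * L + 1)) ^ 2)); lra).
  assert (HexF : ex_RInt (fun s => F' s * ln s) e p).
  { apply exR; [lra|]. intros. apply continuity_pt_mult; auto. apply ln_cpt; lra. }
  assert (Hex : ex_RInt (fun s => f1 s * ln s) e p).
  { apply (ex_RInt_ext (fun s => F' s * ln s)); auto. rewrite Rmin_left, Rmax_right by lra.
    intros. rewrite Hf1 by lra. auto. }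
  exists (RInt (fun s => f1 s * ln s) e p). split.
  { exists (ex_RInt_Reals_0 _ _ _ Hex). rewrite <- RInt_Reals. reflexivity. }
  assert (E1 : RInt (fun s => f1 s * ln s) e p = RInt (fun s => F' s * ln s) e p).
  { apply RInt_ext. rewrite Rmin_left, Rmax_right by lra. intros. rewrite Hf1 by lra. auto. }
  assert (Hexh : forall a c, a <= c -> ex_RInt h a c) by (intros; apply exR; auto).
  assert (E2 : RInt (fun s => F' s * ln s + h s) e p = (F p - F 0) * ln p - (F e - F 0) * ln e).
  { apply (RInt_FTC (fun s => (F s - F 0) * ln s)); [lra| |].
    - intros x hx.
      assert (hx0 : x <> 0) by lra.
      assert (Hd := derivable_pt_lim_mult (fun s => F s - F 0) ln x (F' x - 0) (/ x)
                (derivable_pt_lim_minus _ _ _ _ _ (HF x) (derivable_pt_lim_const (F 0) x))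
                (derivable_pt_lim_ln x ltac:(lra))).
      replace (F' x * ln x + h x) with ((F' x - 0) * ln x + (F x - F 0) * / x).
      { exact Hd. }
      rewrite (Hh x). field. auto.
    - intros. apply continuity_pt_plus; auto. apply continuity_pt_mult; auto. apply ln_cpt; lra. }
  assert (E3 : RInt (fun s => F' s * ln s) e p = RInt (fun s => F' s * ln s + h s) e p - RInt h e p).
  { rewrite <- RInt_minusR; auto.
    - apply RInt_ext. intros. change (F' x * ln x = F' x * ln x + h x - h x). ring.
    - apply exR; [lra|]. intros. apply continuity_pt_plus; auto. apply continuity_pt_mult; auto. apply ln_cpt; lra.
    - apply Hexh; lra. }
  assert (E4 : RInt h 0 e + RInt h e p = RInt h 0 p).
  { apply (RInt_Chasles h 0 e p); apply Hexh; lra. }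
  rewrite E1, E3, E2, <- E4.
  replace ((F p - F 0) * ln p - (F e - F 0) * ln e - RInt h e p - ((F p - F 0) * ln p - (RInt h 0 e + RInt h e p)))
    with (RInt h 0 e - (F e - F 0) * ln e) by ring.
  assert (B1 : Rabs (RInt h 0 e) <= (e - 0) * L).
  { apply abs_RInt_le_const; [lra|apply Hexh; lra|]. intros; apply HL; lra. }
  assert (B2 : Rabs ((F e - F 0) * ln e) <= L * (2 * sqrt e)).
  { rewrite Hh, Rabs_mult, Rabs_mult, (Rabs_right e) by lra.
    assert (K := e_ln_bound e ltac:(lra)).
    assert (K2 : Rabs (h e) <= L) by (apply HL; lra).
    pose proof (Rabs_pos (h e)); pose proof (Rabs_pos (ln e)).
    replace (e * Rabs (h e) * Rabs (ln e)) with (Rabs (h e) * (e * Rabs (ln e))) by ring.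
    apply Rmult_le_compat; auto. apply Rmult_le_pos; lra. }
  set (r := sqrt e) in *.
  assert (hr : 0 < r) by (apply sqrt_lt_R0; lra).
  assert (hrr : r * r = e) by (apply sqrt_sqrt; lra).
  assert (hr2 : r < eps / (3 * L + 1)) by nra.
  assert (hr3 : r * (3 * L + 1) < eps).
  { apply Rmult_lt_reg_r with (/ (3 * L + 1)). apply Rinv_0_lt_compat; lra.
    rewrite Rmult_assoc, Rinv_r by lra. lra. }
  eapply Rle_lt_trans; [apply Rabs_triang|]. rewrite Rabs_Ropp. nra.
Qed.

Lemma arith_bound p b ell : 0 < p -> 0 < b < 1 ->
  let Sp := sqrt (p ^ 2 + b ^ 2) in
  ell = ln (1 + (Sp - p) / (2 * p)) ->
  Rabs ((p * Sp - p ^ 2 - b ^ 2 / 2) / 2 + b ^ 2 * ell / 2) <= b ^ 3 / p ^ 2.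
Proof.
  intros hp hb Sp hell.
  destruct (sqrt_facts b p ltac:(lra)) as [h1 [h2 [h3 h4]]]. fold Sp in h1, h2, h3, h4.
  set (t := Sp - p) in *.
  assert (ht0 : 0 <= t) by (unfold t; nra).
  assert (htb : t * (2 * p + t) = b ^ 2) by (unfold t; nra).
  assert (ht1 : t * (2 * p) <= b ^ 2) by nra.
  assert (ht2 : t <= b ^ 2 / (2 * p)).
  { apply Rmult_le_reg_r with (2 * p); [lra|]. unfold Rdiv. rewrite Rmult_assoc, Rinv_l by lra. lra. }
  assert (hx : 0 <= t / (2 * p)) by (apply Rdiv_le_0_compat; lra).
  assert (hl0 : 0 <= ell).
  { rewrite hell, <- ln_1. apply ln_le; lra. }
  assert (hl1 : ell <= t / (2 * p)).
  { assert (K := exp_ineq1_le ell). rewrite hell, exp_ln in K by lra. rewrite <- hell in K. lra. }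
  assert (hl2 : ell <= b ^ 2 / (4 * p ^ 2)).
  { eapply Rle_trans; [exact hl1|].
    replace (b ^ 2 / (4 * p ^ 2)) with ((b ^ 2 / (2 * p)) / (2 * p)) by (field; lra).
    unfold Rdiv at 1 3. apply Rmult_le_compat_r; auto. left; apply Rinv_0_lt_compat; lra. }
  replace (p * Sp - p ^ 2 - b ^ 2 / 2) with (- t ^ 2 / 2) by (unfold t; nra).
  assert (hp2 : 0 < p ^ 2) by nra.
  assert (T1 : t ^ 2 <= b ^ 4 / (4 * p ^ 2)).
  { assert (t ^ 2 <= (b ^ 2 / (2 * p)) ^ 2) by (apply pow_incr; lra).
    eapply Rle_trans; [exact H|]. right. field. lra. }
  assert (hb3 : b ^ 4 <= b ^ 3) by (assert (0 < b^3) by (apply pow_lt; lra); nra).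
  assert (Q1 : b ^ 4 / p ^ 2 <= b ^ 3 / p ^ 2).
  { unfold Rdiv. apply Rmult_le_compat_r; auto. left; apply Rinv_0_lt_compat; auto. }
  assert (Q2 : b ^ 2 * ell <= b ^ 4 / (4 * p ^ 2)).
  { replace (b ^ 4 / (4 * p ^ 2)) with (b ^ 2 * (b ^ 2 / (4 * p ^ 2))) by (field; lra).
    apply Rmult_le_compat_l; [nra|auto]. }
  assert (Q3 : 0 <= b ^ 4 / p ^ 2) by (apply Rdiv_le_0_compat; nra).
  replace (b ^ 4 / (4 * p ^ 2)) with (b ^ 4 / p ^ 2 / 4) in T1, Q2 by (field; lra).
  apply Rabs_le. split; nra.
Qed.

Ltac toR := match goal with |- @eq _ ?a ?b => change (@eq R a b) end.
Ltac cps := first [ solve [auto] | (apply continuity_pt_const; intros ? ?; reflexivity)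
  | (apply continuity_pt_plus; cps) | (apply continuity_pt_minus; cps) | (apply continuity_pt_mult; cps) ].

Lemma part2 (p : R) (F F' h f : R -> R) (L : R) : 0 < p ->
  (forall x, derivable_pt_lim F x (F' x)) ->
  (forall s, F s - F 0 = s * h s) -> (forall x, continuity_pt h x) ->
  0 <= L -> (forall s, 0 <= s <= p -> Rabs (h s) <= L) ->
  (forall s, 0 <= s <= p -> f s = F s) ->
  forall b, 0 < b < 1 ->
    exists v, is_RInt (fun s => f s * (sqrt (s ^ 2 + b ^ 2) - s)) 0 p v /\
      Rabs (v - (- (f 0) / 2 * b ^ 2 * ln b
                 + (f 0 / 4 + f 0 * ln 2 / 2 + f p * ln p / 2 - ((f p - f 0) * ln p - RInt h 0 p) / 2) * b ^ 2))
        <= (Rabs (f 0) / p ^ 2 + L) * b ^ 3.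
Proof.
  intros hp HF Hh Hhc hL HL Hf b hb.
  set (g := fun s => sqrt (s ^ 2 + b ^ 2) - s).
  assert (Hgc : forall x, continuity_pt g x) by (intros; apply cpt, g_cont; lra).
  assert (HFc : forall x, continuity_pt F x).
  { intros. apply derivable_continuous_pt. exists (F' x). apply HF. }
  assert (HexF : ex_RInt (fun s => F s * g s) 0 p).
  { apply exR; [lra|]. intros. apply continuity_pt_mult; auto. }
  assert (Hex : ex_RInt (fun s => f s * g s) 0 p).
  { apply (ex_RInt_ext (fun s => F s * g s)); auto. rewrite Rmin_left, Rmax_right by lra.
    intros. rewrite Hf by lra. auto. }
  exists (RInt (fun s => f s * g s) 0 p). split.
  { exists (ex_RInt_Reals_0 _ _ _ Hex). rewrite <- RInt_Reals. reflexivity. }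
  assert (f0 : f 0 = F 0) by (apply Hf; lra).
  assert (fp : f p = F p) by (apply Hf; lra).
  set (k := fun s => s * g s - b ^ 2 / 2).
  assert (Hkc : forall x, continuity_pt k x).
  { intros. unfold k. apply continuity_pt_minus; [apply continuity_pt_mult; auto|].
    - apply derivable_continuous_pt, derivable_pt_id.
    - apply continuity_pt_const. intros u v; auto. }
  assert (Ex := fun (q : R -> R) (Hq : forall x, continuity_pt q x) => exR q 0 p ltac:(lra) (fun x _ => Hq x)).
  assert (E1 : RInt (fun s => f s * g s) 0 p =
               f 0 * RInt g 0 p + (b ^ 2 / 2 * RInt h 0 p + RInt (fun s => h s * k s) 0 p)).
  { transitivity (RInt (fun s => f 0 * g s + (b ^ 2 / 2 * h s + h s * k s)) 0 p).
    - apply RInt_ext. rewrite Rmin_left, Rmax_right by lra. intros x hx.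
      rewrite Hf, f0 by lra.
      assert (Fx : F x = F 0 + x * h x) by (rewrite <- Hh; ring).
      change (F x * g x = F 0 * g x + (b ^ 2 / 2 * h x + h x * k x)).
      rewrite Fx. unfold k. ring.
    - rewrite RInt_plusR, RInt_scalR, RInt_plusR, RInt_scalR; auto.
      all: apply Ex; intros; cps. }
  assert (E2 : RInt g 0 p = (p * sqrt (p ^ 2 + b ^ 2) + b ^ 2 * ln (p + sqrt (p ^ 2 + b ^ 2)) - p ^ 2) / 2
                            - b ^ 2 * ln b / 2).
  { rewrite (RInt_FTC (fun s => (s * sqrt (s ^ 2 + b ^ 2) + b ^ 2 * ln (s + sqrt (s ^ 2 + b ^ 2)) - s ^ 2) / 2)); [|lra| |auto].
    - replace (0 ^ 2 + b ^ 2) with (b ^ 2) by ring. rewrite sqrt_pow2 by lra.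
      rewrite Rplus_0_l. toR. lra.
    - intros. apply is_derive_Reals, Gb_deriv; lra. }
  assert (E3 : Rabs (RInt (fun s => h s * k s) 0 p) <= L * (b ^ 3 / 3)).
  { eapply Rle_trans; [apply abs_RInt_le; [lra|apply Ex; intros; apply continuity_pt_mult; auto]|].
    eapply Rle_trans.
    { apply (RInt_le _ (fun s => L * (b ^ 2 / 2 - s * g s))); [lra| | |].
      - apply Ex. intros. apply continuity_pt_comp with (f1 := fun s => h s * k s) (f2 := Rabs).
        + apply continuity_pt_mult; auto.
        + apply Rcontinuity_abs.
      - apply Ex. intros. apply continuity_pt_mult; [apply continuity_pt_const; intros u v; auto|].
        apply continuity_pt_minus; [apply continuity_pt_const; intros u v; auto|].
        apply continuity_pt_mult; auto. apply derivable_continuous_pt, derivable_pt_id.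
      - intros x hx. change (Rabs (h x * k x) <= L * (b ^ 2 / 2 - x * g x)).
        rewrite Rabs_mult.
        assert (hk : k x <= 0).
        { unfold k, g. destruct (sqrt_facts b x ltac:(lra)) as [h1 [h2 [h3 h4]]]. nra. }
        rewrite (Rabs_left1 (k x)) by auto.
        replace (b ^ 2 / 2 - x * g x) with (- k x) by (unfold k; ring).
        apply Rmult_le_compat_r; [lra|]. apply HL; lra. }
    rewrite RInt_scalR.
    2:{ apply Ex. intros. apply continuity_pt_minus; [apply continuity_pt_const; intros u v; auto|].
        apply continuity_pt_mult; auto. apply derivable_continuous_pt, derivable_pt_id. }
    apply Rmult_le_compat_l; auto.
    rewrite (RInt_FTC (fun s => b ^ 2 / 2 * s - ((s ^ 2 + b ^ 2) * sqrt (s ^ 2 + b ^ 2) - s ^ 3) / 3)); [|lra| |].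
    - replace (0 ^ 2 + b ^ 2) with (b ^ 2) by ring. rewrite sqrt_pow2 by lra.
      destruct (sqrt_facts b p ltac:(lra)) as [h1 [h2 [h3 h4]]].
      set (Sp := sqrt (p ^ 2 + b ^ 2)) in *.
      assert (0 <= (Sp - p) ^ 2 * (Sp + p / 2)) by (apply Rmult_le_pos; [apply pow2_ge_0|lra]).
      nra.
    - intros. apply is_derive_Reals. apply (Kb_deriv b x). lra.
    - intros. apply continuity_pt_minus; [apply continuity_pt_const; intros u v; auto|].
      apply continuity_pt_mult; auto. apply derivable_continuous_pt, derivable_pt_id. }
  rewrite E1, E2.
  set (Sp := sqrt (p ^ 2 + b ^ 2)).
  destruct (sqrt_facts b p ltac:(lra)) as [h1 [h2 [h3 h4]]]. fold Sp in h1, h2, h3, h4.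
  set (ell := ln (1 + (Sp - p) / (2 * p))).
  assert (hln : ln (p + Sp) = ln 2 + ln p + ell).
  { assert (hx : 0 <= (Sp - p) / (2 * p)) by (apply Rdiv_le_0_compat; lra).
    unfold ell. rewrite <- ln_mult, <- ln_mult by (first [lra | nra]).
    f_equal. field. lra. }
  rewrite hln.
  set (E := RInt (fun s => h s * k s) 0 p) in *.
  set (J := RInt h 0 p).
  replace (f 0 * ((p * Sp + b ^ 2 * (ln 2 + ln p + ell) - p ^ 2) / 2 - b ^ 2 * ln b / 2) + (b ^ 2 / 2 * J + E) -
     (- f 0 / 2 * b ^ 2 * ln b + (f 0 / 4 + f 0 * ln 2 / 2 + f p * ln p / 2 - ((f p - f 0) * ln p - J) / 2) * b ^ 2))
    with (f 0 * ((p * Sp - p ^ 2 - b ^ 2 / 2) / 2 + b ^ 2 * ell / 2) + E) by field.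
  assert (A := arith_bound p b ell hp hb eq_refl).
  eapply Rle_trans; [apply Rabs_triang|]. rewrite Rabs_mult.
  assert (Rabs (f 0) * Rabs ((p * Sp - p ^ 2 - b ^ 2 / 2) / 2 + b ^ 2 * ell / 2) <= Rabs (f 0) * (b ^ 3 / p ^ 2)).
  { apply Rmult_le_compat_l; auto. apply Rabs_pos. }
  replace ((Rabs (f 0) / p ^ 2 + L) * b ^ 3) with (Rabs (f 0) * (b ^ 3 / p ^ 2) + L * b ^ 3) by (field; lra).
  assert (0 < b ^ 3) by (apply pow_lt; lra).
  nra.
Qed.

Theorem lemma2 (p : R) (f f1 f2 : R -> R) (hp : 0 < p)
  (hf1 : has_deriv_on f f1 0 p)
  (hf2 : has_deriv_on f1 f2 0 p)
  (hc2 : cont_on f2 0 p)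
  (h3 : exists (d0 : R) (f3 : R -> R) (M : R),
          0 < d0 /\ d0 <= p /\ has_deriv_on f2 f3 0 d0 /\
          forall s, 0 <= s <= d0 -> Rabs (f3 s) <= M) :
  exists I : R,
    improper_int0 (fun s => f1 s * ln s) p I /\
    exists C d : R, 0 < d /\
      forall b, 0 < b < d ->
        exists v, is_RInt (fun s => f s * (sqrt (s ^ 2 + b ^ 2) - s)) 0 p v /\
          Rabs (v - (- (f 0) / 2 * b ^ 2 * ln b
                     + (f 0 / 4 + f 0 * ln 2 / 2 + f p * ln p / 2 - I / 2) * b ^ 2))
            <= C * b ^ 3.
Proof.
  set (F := ext p f f1). set (F' := fun s => f1 (cl p s)).
  assert (HF : forall x, derivable_pt_lim F x (F' x)) by (apply ext_deriv; auto).
  assert (HFc : forall x, continuity_pt F' x) by (apply (clf_cont p f1 f2); auto).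
  set (h := hq F (F' 0)).
  assert (Hh : forall s, F s - F 0 = s * h s) by (intros; apply hq_eq).
  assert (Hhc : forall x, continuity_pt h x) by (apply hq_cont; auto).
  destruct (bound_cont h 0 p ltac:(lra) Hhc) as [L [hL HL]].
  assert (Hf : forall s, 0 <= s <= p -> f s = F s) by (intros; unfold F; rewrite ext_in; auto).
  assert (Hf1 : forall s, 0 <= s <= p -> f1 s = F' s) by (intros; unfold F'; rewrite cl_in; auto).
  exists ((f p - f 0) * ln p - RInt h 0 p). split.
  - rewrite (Hf p), (Hf 0) by lra.
    apply (part1 p F F' h f1 L); auto.
  - exists (Rabs (f 0) / p ^ 2 + L), 1. split; [lra|].
    intros b hb. apply (part2 p F F' h f L); auto.
Qed.
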